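(* Consider Algorithm PDFPM (described in the context), and let $\bar{x}^k$ be the point computed in Step 2 at some iteration $k$ with current parameter $\sigma_k$. Suppose Assumptions A1, A2 and A3 (described in the context) hold. If $\sigma_k\|\bar{x}^k-x^k\|\ge\epsilon$ and $$\sigma_k\ge\max_{j\in\mathcal{J}}\Big[\frac{5L_j+\overline{B}}{1-\alpha}+\frac{2n^{\frac{1-\beta_j}{2}}M_j+2M_j}{(\beta_j+1)(1-\alpha)}\epsilon^{\beta_j-1}\Big]^{\frac1{\beta_j}},$$ then for all $j\in\mathcal{J}$ $$F_j(\bar{x}^k)\le F_j(x^k)-\frac{\alpha}{2}\sigma_k\|\bar{x}^k-x^k\|^2\quad\text{and}\quad F_j(\bar{x}^k)\le F_j(x^k)-\frac{\alpha\epsilon^2}{2\sigma_k}.$$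
   Context: Setting: $m,n\ge1$, $\mathcal{J}=\{1,\dots,m\}$, $F=(F_1,\dots,F_m)$ with $F_j=f_j+h_j$, where $f_j:\mathbb{R}^n\to\mathbb{R}$ is differentiable and $h_j:\mathbb{R}^n\to\mathbb{R}\cup\{+\infty\}$ is convex. For each $j$ a map $g_{f_j}:\mathbb{R}^n\times[0,1]\to\mathbb{R}^n$ is given with $\lim_{\lambda\to0}g_{f_j}(x,\lambda)=\nabla f_j(x)$. $\|\cdot\|$ is the Euclidean norm (spectral norm for matrices). Algorithm PDFPM: choose $x^0\in\mathbb{R}^n$, $\alpha,\epsilon\in(0,1)$, $\sigma_0\ge1$, symmetric positive semidefinite $B_j^0\in\mathbb{R}^{n\times n}$; set $k=0$. Step 1: choose $0<\lambda_k\le \epsilon/(\sigma_k\sqrt n)$ and compute $g_{f_j}(x^k,\lambda_k)$ for each $j$. Step 2: let $\bar{x}^k$ be the (unique) minimizer of $\Phi_{x^k}(x)+\frac{\sigma_k}{2}\|x-x^k\|^2$, where $\Phi_{x^k}(x)=\max_{j\in\mathcal{J}}[\langle g_{f_j}(x^k,\lambda_k)+\frac12B_j^k(x-x^k),x-x^k\rangle+h_j(x)-h_j(x^k)]$. Step 3: if $\sigma_k\|\bar{x}^k-x^k\|\ge\epsilon$ go to Step 4; otherwise stop. Step 4: if $F_j(\bar{x}^k)\le F_j(x^k)-\frac{\alpha\epsilon^2}{2\sigma_k}$ for all $j\in\mathcal{J}$, set $x^{k+1}=\bar{x}^k$, $\sigma_{k+1}=\sigma_k$, choose symmetric positive semidefinite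 $B_j^{k+1}$, set $k\leftarrow k+1$ and go to Step 1; otherwise replace $\sigma_k$ by $2\sigma_k$ and go to Step 1 (same $k$). Assumption A1: there is $\overline{B}\ge0$ with $\|B_j^k\|\le\overline{B}$ for all iterations $k$ and all $j\in\mathcal{J}$. Assumption A2: for each $j$ there are $L_j,M_j>0$ and $\beta_j\in(0,1]$ with $f_j(y)\le f_j(x)+\langle\nabla f_j(x),y-x\rangle+\frac{L_j}{2}\|y-x\|^2+\frac{M_j}{\beta_j+1}\|y-x\|^{\beta_j+1}$ for all $x,y\in\mathbb{R}^n$. Assumption A3: with the same $L_j,M_j,\beta_j$, $\|\nabla f_j(x)-g_{f_j}(x,\lambda)\|\le\lambda\frac{\sqrt n L_j}{2}+\sqrt n\frac{M_j}{\beta_j+1}\lambda^{\beta_j}$ for all $x$ and all $\lambda\in(0,1]$. *)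

(* Defs.v *)
From HB Require Import structures.
From mathcomp Require Import all_boot all_order all_algebra.
From mathcomp Require Import all_classical all_reals all_analysis.
Set Implicit Arguments. Unset Strict Implicit. Unset Printing Implicit Defensive.
Import Order.TTheory GRing.Theory Num.Theory.
Import numFieldNormedType.Exports.
Local Open Scope ring_scope.

Definition dotv (R : realType) (n : nat) (u v : 'cV[R]_n) : R :=
  \sum_(i < n) u i ord0 * v i ord0.

Definition enorm (R : realType) (n : nat) (u : 'cV[R]_n) : R :=
  Num.sqrt (dotv u u).

(* Spectral (operator) norm bound ||B|| <= c, unfolded from the definition
   ||B|| = sup_{x <> 0} ||Bx|| / ||x|| (Euclidean norms). *)
Definition spec_norm_le (R : realType) (n : nat) (B : 'M[R]_n) (c : R) : Prop :=
  forall x : 'cV[R]_n, enorm (B *m x) <= c * enorm x.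

Definition sym_psd (R : realType) (n : nat) (B : 'M[R]_n) : Prop :=
  B^T = B /\ forall x : 'cV[R]_n, 0 <= dotv x (B *m x).

Definition has_gradient (R : realType) (n : nat)
    (f : 'cV[R]_n -> R) (grad : 'cV[R]_n -> 'cV[R]_n) : Prop :=
  forall x, differentiable f x /\ forall v, 'd f x v = dotv (grad x) v.

Definition ext_convex (R : realType) (n : nat) (h : 'cV[R]_n -> \bar R) : Prop :=
  (forall x, h x != -oo%E) /\
  forall (x y : 'cV[R]_n) (t : R), 0 <= t <= 1 ->
    (h (t *: x + (1 - t) *: y)%R <= t%:E * h x + (1 - t)%:E * h y)%E.

(* Main.v *)
Require Import Defs.
From HB Require Import structures.
From mathcomp Require Import all_boot all_order all_algebra.
From mathcomp Require Import all_classical all_reals all_analysis.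
Import Order.TTheory GRing.Theory Num.Theory.
Import numFieldNormedType.Exports.
Local Open Scope classical_set_scope.
Local Open Scope ring_scope.


From mathcomp Require Import ring lra.

Section Aux.
Variable R : realType.
Variable n : nat.
Implicit Types u v w : 'cV[R]_n.

Lemma dotvC u v : dotv u v = dotv v u.
Proof. by apply: eq_bigr => i _; rewrite mulrC. Qed.
Lemma dotvDl u v w : dotv (u + v) w = dotv u w + dotv v w.
Proof. by rewrite /dotv -big_split; apply: eq_bigr => i _; rewrite mxE mulrDl. Qed.
Lemma dotvZl a u w : dotv (a *: u) w = a * dotv u w.
Proof. by rewrite /dotv mulr_sumr; apply: eq_bigr => i _; rewrite mxE mulrA. Qed.
Lemma dotvNl u w : dotv (- u) w = - dotv u w.
Proof. by rewrite /dotv -sumrN; apply: eq_bigr => i _; rewrite mxE mulNr. Qed.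
Lemma dotvBl u v w : dotv (u - v) w = dotv u w - dotv v w.
Proof. by rewrite dotvDl dotvNl. Qed.
Lemma dotv0r u : dotv u 0 = 0.
Proof. by rewrite /dotv big1 // => i _; rewrite mxE mulr0. Qed.
Lemma dotv_ge0 u : 0 <= dotv u u.
Proof. by apply: sumr_ge0 => i _; rewrite -expr2 sqr_ge0. Qed.
Lemma enorm_sqr u : enorm u ^+ 2 = dotv u u.
Proof. by rewrite /enorm sqr_sqrtr // dotv_ge0. Qed.
Lemma enorm_ge0 u : 0 <= enorm u. Proof. exact: sqrtr_ge0. Qed.
Lemma enorm0 : enorm (0 : 'cV[R]_n) = 0.
Proof. by rewrite /enorm dotv0r sqrtr0. Qed.
Lemma polar u v s : 0 < s -> 2 * dotv u v <= s * dotv u u + dotv v v / s.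
Proof.
move=> s0.
have : 0 <= \sum_(i < n) (s * u i ord0 - v i ord0) ^+ 2 / s.
  by apply: sumr_ge0 => i _; rewrite divr_ge0 // ?sqr_ge0 // ltW.
have -> : \sum_(i < n) (s * u i ord0 - v i ord0) ^+ 2 / s
   = s * dotv u u + dotv v v / s - 2 * dotv u v.
  rewrite /dotv !mulr_sumr mulr_suml -sumrN -!big_split /=.
  by apply: eq_bigr => i _; field; rewrite gt_eqF.
by rewrite subr_ge0.
Qed.
Lemma cs_bound u v e : 0 < e -> enorm u <= e -> 0 < enorm v ->
  dotv u v <= e * enorm v.
Proof.
move=> e0 ue v0.
have := @polar u v (enorm v / e) (divr_gt0 v0 e0).
rewrite -!enorm_sqr => H.
have uu : enorm u ^+ 2 <= e ^+ 2 by rewrite lerXn2r // ?nnegrE ?enorm_ge0 ?ltW.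
have : 2 * dotv u v <= enorm v / e * e ^+ 2 + enorm v ^+ 2 / (enorm v / e).
  apply: le_trans H _; rewrite lerD2r; apply: ler_wpM2l => //.
  by rewrite divr_ge0 // ltW.
have -> : enorm v / e * e ^+ 2 + enorm v ^+ 2 / (enorm v / e) = 2 * (e * enorm v).
  by field; rewrite !gt_eqF.
by rewrite ler_pM2l.
Qed.
End Aux.

Theorem theorem1 (R : realType) (m n : nat)
  (f : 'I_m -> 'cV[R]_n -> R) (grad : 'I_m -> 'cV[R]_n -> 'cV[R]_n)
  (h : 'I_m -> 'cV[R]_n -> \bar R)
  (g : 'I_m -> 'cV[R]_n -> R -> 'cV[R]_n)
  (L M beta : 'I_m -> R) (Bbar : R)
  (alpha eps sigma lambda : R)
  (B : 'I_m -> 'M[R]_n) (xk xbar : 'cV[R]_n) :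
  (0 < m)%N -> (0 < n)%N ->
  (forall j, has_gradient (f j) (grad j)) ->
  (forall j, ext_convex (h j)) ->
  (forall j x, (fun l => g j x l) @ 0^'+ --> grad j x) ->
  0 < alpha < 1 -> 0 < eps < 1 -> 1 <= sigma ->
  0 < lambda <= eps / (sigma * Num.sqrt n%:R) ->
  (* current iterate lies in the domain of every h_j *)
  (forall j, h j xk \is a fin_num) ->
  (forall j, sym_psd (B j)) ->
  (* xbar: minimizer of the Step 2 subproblem *)
  (forall y : 'cV[R]_n,
     (\big[maxe/-oo]_(j < m)
        ((dotv (g j xk lambda + 2^-1 *: (B j *m (xbar - xk))) (xbar - xk))%:E
           + (h j xbar - h j xk))
      + (sigma / 2 * enorm (xbar - xk) ^+ 2)%:E
     <= \big[maxe/-oo]_(j < m)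
        ((dotv (g j xk lambda + 2^-1 *: (B j *m (y - xk))) (y - xk))%:E
           + (h j y - h j xk))
      + (sigma / 2 * enorm (y - xk) ^+ 2)%:E)%E) ->
  (* Assumption A1 (at the current iteration) *)
  0 <= Bbar -> (forall j, spec_norm_le (B j) Bbar) ->
  (* Assumption A2 *)
  (forall j, 0 < L j /\ 0 < M j /\ 0 < beta j <= 1) ->
  (forall j (x y : 'cV[R]_n),
     f j y <= f j x + dotv (grad j x) (y - x) + L j / 2 * enorm (y - x) ^+ 2
              + M j / (beta j + 1) * enorm (y - x) `^ (beta j + 1)) ->
  (* Assumption A3 *)
  (forall j x (l : R), 0 < l <= 1 ->
     enorm (grad j x - g j x l)
       <= l * (Num.sqrt n%:R * L j / 2)
          + Num.sqrt n%:R * M j / (beta j + 1) * l `^ (beta j)) ->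
  (* Step 3 test passed *)
  eps <= sigma * enorm (xbar - xk) ->
  \big[Num.max/0]_(j < m)
     (((5 * L j + Bbar) / (1 - alpha)
       + (2 * (n%:R `^ ((1 - beta j) / 2)) * M j + 2 * M j)
           / ((beta j + 1) * (1 - alpha)) * eps `^ (beta j - 1)) `^ (1 / beta j))
    <= sigma ->
  forall j,
    ((f j xbar)%:E + h j xbar
       <= (f j xk)%:E + h j xk - (alpha / 2 * sigma * enorm (xbar - xk) ^+ 2)%:E
     /\ (f j xbar)%:E + h j xbar
       <= (f j xk)%:E + h j xk - (alpha * eps ^+ 2 / (2 * sigma))%:E)%E.
Proof.
move=> m0 n0 Hgrad Hh Hg /andP[a0 a1] /andP[e0 e1] s1 /andP[l0 lle] Hxk Hpsd
  Hmin Bb0 HB Hpos HA2 HA3 Htest Hmax j.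
have [L0 [M0 /andP[b0 b1]]] := Hpos j.
have s0 : 0 < sigma by apply: lt_le_trans s1.
have Hj : ((dotv (g j xk lambda + 2^-1 *: (B j *m (xbar - xk))) (xbar - xk))%:E
    + (h j xbar - h j xk) + (sigma / 2 * enorm (xbar - xk) ^+ 2)%:E <= 0)%E.
  have H := Hmin xk; rewrite subrr enorm0 expr0n /= mulr0 adde0 in H.
  apply: le_trans (le_trans _ H) _.
    rewrite leeD2r //.
    exact: (le_bigmax _ (fun j0 => ((dotv (g j0 xk lambda + 2^-1 *: (B j0 *m (xbar - xk))) (xbar - xk))%:E
           + (h j0 xbar - h j0 xk))%E) j).
  apply: bigmax_le => // i _.
  by rewrite dotv0r subee // add0e.
have := Hxk j; case Eha: (h j xk) => [ha||] // _.
case Ehb: (h j xbar) => [hb||]; last first.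
  by have := (Hh j).1 xbar; rewrite Ehb.
  by move: Hj; rewrite Ehb Eha /=.
rewrite Ehb Eha in Hj.
move: Hj; rewrite -!EFinD lee_fin => Hj.
rewrite !lee_fin.
have H2 := HA2 j xk xbar.
set d := xbar - xk in Hj Htest H2 *.
set r := enorm d in Hj Htest H2 *.
rewrite dotvDl dotvZl in Hj.
have HP : 0 <= dotv (B j *m d) d by rewrite dotvC; exact: (Hpsd j).2.
have r0 : 0 < r.
  have : 0 < sigma * r by apply: lt_le_trans Htest.
  by rewrite pmulr_rgt0.
set sn := Num.sqrt (n%:R : R) in lle HA3.
have sn1 : 1 <= sn by rewrite /sn -{1}sqrtr1 ler_sqrt ?ler0n // ler1n.
have sn0 : 0 < sn by apply: lt_le_trans sn1.
have lsn : lambda * sn <= r.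
  move: lle; rewrite ler_pdivlMr ?mulr_gt0 // => lle.
  have : sigma * (lambda * sn) <= sigma * r.
    by apply: le_trans Htest; rewrite mulrCA.
  by rewrite ler_pM2l.
have l1 : lambda <= 1.
  move: lle; rewrite ler_pdivlMr ?mulr_gt0 // => lle.
  apply: le_trans (ltW e1); apply: le_trans lle.
  by apply: ler_peMr; [exact: ltW | exact: mulr_ege1].
set e := lambda * (sn * L j / 2) + sn * M j / (beta j + 1) * lambda `^ beta j.
have He : enorm (grad j xk - g j xk lambda) <= e by apply: HA3; rewrite l0 l1.
have e0' : 0 < e.
  rewrite /e ltr_pwDl ?mulr_gt0 ?divr_gt0 // ?powR_ge0 //.
  by rewrite mulr_ge0 ?powR_ge0 // divr_ge0 ?mulr_ge0 ?ltW // addr_gt0.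
have H3 := @cs_bound R n _ _ e e0' He r0.
rewrite dotvBl in H3.
rewrite powRD ?powRr1 ?(ltW r0) ?(gt_eqF r0) ?implybT // in H2.
set N := n%:R `^ ((1 - beta j) / 2) in Hmax *.
set c := r `^ beta j in H2 *.
have N0 : 0 <= N by apply: powR_ge0.
have c0 : 0 <= c by apply: powR_ge0.
have Hsn : sn * lambda `^ beta j <= N * c.
  have E1 : sn `^ (1 - beta j) = N.
    by rewrite /sn -powR12_sqrt ?ler0n // -powRrM mulrC.
  have -> : sn = N * sn `^ beta j.
    rewrite -{1}(powRr1 (ltW sn0)) -{1}(subrK (beta j) 1) powRD ?E1 //.
    by rewrite (gt_eqF sn0) implybT.
  rewrite -mulrA; apply: ler_wpM2l => //; rewrite -(powRM _ (ltW sn0) (ltW l0)).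
  rewrite mulrC; apply: (ge0_ler_powR (ltW b0)) => //.
    by rewrite nnegrE mulr_ge0 ?ltW.
  by rewrite nnegrE ltW.
have {}H3 : dotv (grad j xk) d - dotv (g j xk lambda) d <= e * r := H3.
have H4 : e <= r * (L j / 2) + M j / (beta j + 1) * (N * c).
  have -> : e = (lambda * sn) * (L j / 2) + M j / (beta j + 1) * (sn * lambda `^ beta j).
    by rewrite /e; ring.
  apply: lerD; first by apply: ler_wpM2r => //; rewrite divr_ge0 ?ltW.
  by apply: ler_wpM2l => //; rewrite divr_ge0 ?ltW // addr_gt0.
have H4r := ler_wpM2r (ltW r0) H4.
pose X := (5 * L j + Bbar) / (1 - alpha).
pose Yc := (2 * N * M j + 2 * M j) / ((beta j + 1) * (1 - alpha)).
pose p := eps `^ (beta j - 1).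
have HZ : (X + Yc * p) `^ (1 / beta j) <= sigma.
  apply: le_trans Hmax.
  by rewrite (bigD1 j) //= le_max lexx.
have a1' : 0 < 1 - alpha by rewrite subr_gt0.
have X0 : 0 <= X.
  by apply: divr_ge0; [apply: addr_ge0 => //; apply: mulr_ge0 => //; exact: ltW | exact: ltW].
have Yc0 : 0 <= Yc.
  apply: divr_ge0.
    by apply: addr_ge0; apply: mulr_ge0 => //; (try apply: mulr_ge0) => //; exact: ltW.
  by apply: mulr_ge0; apply: ltW => //; apply: addr_gt0.
have p0 : 0 <= p by apply: powR_ge0.
have Z0 : 0 <= X + Yc * p by rewrite addr_ge0 // mulr_ge0.
have HZ' : X + Yc * p <= sigma `^ beta j.
  have -> : X + Yc * p = ((X + Yc * p) `^ (1 / beta j)) `^ beta j.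
    by rewrite -powRrM div1r mulVf ?gt_eqF // powRr1.
  apply: (ge0_ler_powR (ltW b0)) => //; rewrite nnegrE ?powR_ge0 //.
  exact: ltW.
pose a := sigma `^ (1 - beta j).
pose b := r `^ (1 - beta j).
pose q := eps `^ (1 - beta j).
have Ha1 : 1 <= a.
  have H := @ler_powR R sigma s1 0 (1 - beta j); rewrite powRr0 in H; apply: H; by rewrite subr_ge0.
have Hsig : sigma = sigma `^ beta j * a.
  rewrite /a -powRD; last by rewrite (gt_eqF s0) implybT.
  have -> : beta j + (1 - beta j) = 1 by rewrite addrC subrK.
  by rewrite powRr1 // ltW.
have Hr : r = b * c.
  rewrite /b /c -powRD; last by rewrite (gt_eqF r0) implybT.
  by rewrite subrK powRr1 // ltW.
have Hab : q <= a * b.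
  rewrite /a /b /q -(powRM _ (ltW s0) (ltW r0)).
  apply: (ge0_ler_powR _) => //; first by rewrite subr_ge0.
    by rewrite nnegrE ltW.
  by rewrite nnegrE mulr_ge0 // ltW.
have Hpq : p * q = 1.
  rewrite /p /q -powRD; last by rewrite (gt_eqF e0) implybT.
  have -> : beta j - 1 + (1 - beta j) = 0 by ring.
  by rewrite powRr0.
have T1 : (X + Yc * p) * (a * r) <= sigma `^ beta j * (a * r).
  apply: ler_wpM2r => //; apply: mulr_ge0; [exact: le_trans ler01 Ha1 | exact: ltW].
have T2 : X * r <= X * (a * r).
  by apply: ler_wpM2l => //; apply: ler_peMl => //; exact: ltW.
have T3 : Yc * c <= Yc * (p * (a * b) * c).
  apply: ler_wpM2l => //.
  have : p * q * c <= p * (a * b) * c.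
    by apply: ler_wpM2r => //; apply: ler_wpM2l.
  by rewrite Hpq mul1r.
have E3 : Yc * p * (a * r) = Yc * (p * (a * b) * c) by rewrite [in LHS]Hr; ring.
have Hsr : sigma * r = sigma `^ beta j * (a * r) by rewrite {1}Hsig mulrA.
have S1 : X * r + Yc * c <= sigma * r by lra.
have S2 := ler_wpM2l (ltW (divr_gt0 a1' (ltr0Sn _ 1))) S1.
have F1 : (1 - alpha) / 2 * (X * r + Yc * c)
   = (5 * L j + Bbar) / 2 * r + (N + 1) * M j / (beta j + 1) * c.
  rewrite /X /Yc; field.
  by rewrite !gt_eqF // addr_gt0.
rewrite F1 in S2.
have H5r := ler_wpM2r (ltW r0) S2.
have sl : 0 <= (3 * L j + Bbar) / 2 * r ^+ 2.
  apply: mulr_ge0; last exact: sqr_ge0.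
  apply: divr_ge0 => //; apply: addr_ge0 => //; apply: mulr_ge0 => //; exact: ltW.
have G1 : f j xbar + hb <= f j xk + ha - alpha / 2 * sigma * r ^+ 2.
  rewrite expr2 in H2 sl *.
  lra.
split => //.
apply: le_trans G1 _.
rewrite lerD2l lerN2.
have Hee : eps ^+ 2 <= (sigma * r) ^+ 2.
  apply: lerXn2r; [rewrite nnegrE; exact: ltW | rewrite nnegrE; apply: mulr_ge0; exact: ltW | exact: Htest].
have -> : alpha / 2 * sigma * r ^+ 2 = alpha / (2 * sigma) * (sigma * r) ^+ 2.
  by field; rewrite gt_eqF.
rewrite mulrAC; apply: ler_wpM2l => //.
  by apply: divr_ge0; apply: ltW => //; apply: mulr_gt0.
Qed.
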